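(* If $G$ is a connected $\mathcal{C}$-$\mathrm{HH}$ graph which is not a tree, then its girth satisfies $g(G)\le 6$.
   Context: The girth $g(G)$ is the minimum length of a cycle in $G$. Subgraphs are induced; a homomorphism maps edges to edges. A graph $G$ is $\mathcal{C}$-$\mathrm{HH}$ if every homomorphism from a finite connected induced subgraph of $G$ into $G$ extends to a homomorphism $G\to G$. *)

(* Defs.v *)
(* Graphs may be infinite: a simple graph is a type of vertices
   with a symmetric irreflexive adjacency relation. *)
From Stdlib Require Import Arith List Relations.

Record graph := Graph {
  vertex :> Type;
  adj : vertex -> vertex -> Prop;
  adj_sym : forall x y, adj x y -> adj y x;
  adj_irrefl : forall x, ~ adj x x
}.

Definition connected_in (G : graph) (S : G -> Prop) (x y : G) : Prop :=
  clos_refl_trans G (fun u v => S u /\ S v /\ adj G u v) x y.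

Definition connected (G : graph) : Prop :=
  forall x y : G, connected_in G (fun _ => True) x y.

Definition is_cycle (G : graph) (n : nat) (c : nat -> G) : Prop :=
  3 <= n /\
  (forall i j, i < n -> j < n -> c i = c j -> i = j) /\
  (forall i, i < n -> adj G (c i) (c ((i + 1) mod n))).

Definition has_cycle_of_length (G : graph) (n : nat) : Prop :=
  exists c : nat -> G, is_cycle G n c.

Definition acyclic (G : graph) : Prop := forall n, ~ has_cycle_of_length G n.
Definition is_tree (G : graph) : Prop := connected G /\ acyclic G.

Definition is_girth (G : graph) (g : nat) : Prop :=
  has_cycle_of_length G g /\ (forall n, has_cycle_of_length G n -> g <= n).

Definition finite_set (G : graph) (S : G -> Prop) : Prop :=
  exists l : list G, forall x, S x -> In x l.

Definition induced_connected (G : graph) (S : G -> Prop) : Prop :=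
  forall x y, S x -> S y -> connected_in G S x y.

(* f : V -> V restricted to S is a homomorphism from G[S] into G
   (values of f outside S are irrelevant) *)
Definition hom_on (G : graph) (S : G -> Prop) (f : G -> G) : Prop :=
  forall x y, S x -> S y -> adj G x y -> adj G (f x) (f y).

Definition hom (G : graph) (h : G -> G) : Prop :=
  forall x y, adj G x y -> adj G (h x) (h y).

Definition C_HH (G : graph) : Prop :=
  forall (S : G -> Prop) (f : G -> G),
    finite_set G S -> induced_connected G S -> hom_on G S f ->
    exists h : G -> G, hom G h /\ (forall x, S x -> h x = f x).

(* Main.v *)
Require Import Defs.
From Stdlib Require Import Arith List Relations Lia Classical ClassicalEpsilon.

Lemma least_nat (P : nat -> Prop) :
  (exists n, P n) -> exists n, P n /\ forall k, P k -> n <= k.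
Proof.
  intros [n Hn]. revert Hn. induction n as [n IH] using (well_founded_induction lt_wf).
  intros Hn.
  destruct (classic (exists k, k < n /\ P k)) as [[k [Hk Pk]]|Hno].
  - exact (IH k Hk Pk).
  - exists n. split; [exact Hn|]. intros k Pk.
    destruct (le_lt_dec n k) as [l|l]; [exact l|]. exfalso. apply Hno; eauto.
Qed.

Lemma chord (G : graph) g (c : nat -> G) :
  is_cycle G g c -> (forall n, has_cycle_of_length G n -> g <= n) ->
  forall i j, i < j -> j + 1 < g -> adj G (c i) (c j) -> j = i + 1.
Proof.
  intros [H3 [Hinj Hadj]] Hmin i j Hij Hjg Ha.
  destruct (Nat.eq_dec j (i+1)) as [e|ne]; [exact e|exfalso].
  assert (Hc : is_cycle G (j - i + 1) (fun t => c (i + t))).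
  { split; [lia|split].
    - intros a b Ha' Hb' E.
      assert (i + a = i + b) by (apply Hinj; [lia|lia|exact E]). lia.
    - intros t Ht. destruct (Nat.eq_dec t (j - i)) as [->|Hne].
      + replace ((j - i + 1) mod (j - i + 1)) with 0 by (symmetry; apply Nat.mod_same; lia).
        replace (i + 0) with i by lia. replace (i + (j-i)) with j by lia. now apply adj_sym.
      + rewrite Nat.mod_small by lia. specialize (Hadj (i+t) ltac:(lia)).
        rewrite Nat.mod_small in Hadj by lia. replace (i + (t+1)) with (i+t+1) by lia. exact Hadj. }
  specialize (Hmin _ (ex_intro _ _ Hc)). lia.
Qed.

Lemma chord2 (G : graph) g (c : nat -> G) :
  is_cycle G g c -> (forall n, has_cycle_of_length G n -> g <= n) ->
  forall i j, i + 1 < g -> j + 1 < g -> adj G (c i) (c j) -> i = j + 1 \/ j = i + 1.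
Proof.
  intros Hc Hmin i j Hi Hj Ha. destruct (lt_eq_lt_dec i j) as [[l|e]|l].
  - right. eapply chord; eauto.
  - subst. exfalso. eapply adj_irrefl; eauto.
  - left. eapply chord; eauto. apply adj_sym; auto.
Qed.

Lemma short (G : graph) g c : is_cycle G g c -> (forall n, has_cycle_of_length G n -> g <= n) ->
  forall m (w : G), 3 <= m -> m + 2 < g -> adj G w (c 0) -> adj G (c m) w -> False.
Proof.
  intros Hc Hmin m w Hm Hmg Hw0 Hwm.
  pose proof Hc as [H3 [Hinj Hadj]].
  assert (Hnw : forall t, t <= m -> c t <> w).
  { intros t Ht E. subst w.
    pose proof (chord2 G g c Hc Hmin t 0 ltac:(lia) ltac:(lia) Hw0).
    pose proof (chord2 G g c Hc Hmin m t ltac:(lia) ltac:(lia) Hwm). lia. }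
  assert (Hc' : is_cycle G (m+2) (fun t => if t <=? m then c t else w)).
  { split; [lia|split].
    - intros a b Ha Hb E.
      destruct (Nat.leb_spec a m); destruct (Nat.leb_spec b m).
      + apply Hinj; [lia|lia|exact E].
      + exfalso; apply (Hnw a); auto.
      + exfalso; apply (Hnw b); auto.
      + lia.
    - intros t Ht. destruct (Nat.eq_dec t (m+1)) as [->|ne].
      + replace ((m+1+1) mod (m+2)) with 0
          by (symmetry; replace (m+1+1) with (m+2) by lia; apply Nat.mod_same; lia).
        destruct (Nat.leb_spec (m+1) m); [lia|]. simpl. exact Hw0.
      + rewrite Nat.mod_small by lia.
        destruct (Nat.leb_spec t m); [|lia].
        destruct (Nat.leb_spec (t+1) m).
        * specialize (Hadj t ltac:(lia)). rewrite Nat.mod_small in Hadj by lia. exact Hadj.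
        * assert (t = m) by lia. subst t. exact Hwm. }
  specialize (Hmin _ (ex_intro _ _ Hc')). lia.
Qed.

Theorem lemma5p7 (G : graph) :
  connected G -> C_HH G -> ~ is_tree G ->
  exists g, is_girth G g /\ g <= 6.
Proof.
  intros Hcon HH Hnt.
  assert (Hex : exists n, has_cycle_of_length G n).
  { apply NNPP. intro Hno. apply Hnt. split; auto. intros n Hn. apply Hno; eauto. }
  destruct (least_nat _ Hex) as [g [[c Hc] Hmin]].
  exists g. split; [split; [exists c; exact Hc| exact Hmin]|].
  destruct (le_lt_dec g 6) as [l|l]; [exact l|exfalso].
  pose proof Hc as [H3 [Hinj Hadj]].
  set (K := g - 2).
  set (Sx := fun x : G => exists i, i <= K /\ c i = x).
  set (phi := fun i => if i <=? 3 then i else 3 + (i - 3) mod 2).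
  set (idx := fun x : G => epsilon (inhabits 0) (fun i => i <= K /\ c i = x)).
  set (f := fun x => c (phi (idx x))).
  assert (Hidx : forall i, i <= K -> idx (c i) = i).
  { intros i Hi. unfold idx.
    destruct (epsilon_spec (inhabits 0) (fun k => k <= K /\ c k = c i)
                (ex_intro _ i (conj Hi eq_refl))) as [Hk E].
    apply Hinj; [lia|lia|exact E]. }
  assert (Hphi : forall i, phi i <= 4).
  { intro i. unfold phi. destruct (Nat.leb_spec i 3); [lia|].
    pose proof (Nat.mod_upper_bound (i-3) 2). lia. }
  assert (Hphi3 : forall i, 3 <= i -> 3 <= phi i).
  { intros i Hi. unfold phi. destruct (Nat.leb_spec i 3); lia. }
  assert (Hstep : forall i, phi (i+1) = phi i + 1 \/ phi i = phi (i+1) + 1).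
  { intro i. unfold phi. destruct (Nat.leb_spec i 3); destruct (Nat.leb_spec (i+1) 3); try lia.
    - assert (i = 3) by lia. subst i. left. reflexivity.
    - replace (i + 1 - 3) with (S (i - 3)) by lia.
      pose proof (Nat.div_mod (i-3) 2 ltac:(lia)).
      pose proof (Nat.div_mod (S (i-3)) 2 ltac:(lia)).
      pose proof (Nat.mod_upper_bound (i-3) 2 ltac:(lia)).
      pose proof (Nat.mod_upper_bound (S (i-3)) 2 ltac:(lia)).
      lia. }
  assert (Hadjc : forall a, a <= 4 -> adj G (c a) (c (a+1))).
  { intros a Ha. specialize (Hadj a ltac:(lia)). rewrite Nat.mod_small in Hadj by lia. exact Hadj. }
  assert (Hadjphi : forall i, adj G (c (phi i)) (c (phi (i+1)))).
  { intro i. destruct (Hstep i) as [E|E]; rewrite E.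
    - apply Hadjc. apply Hphi.
    - apply adj_sym. apply Hadjc. apply Hphi. }
  assert (Hhom : hom_on G Sx f).
  { intros x y [i [Hi <-]] [j [Hj <-]] Ha. unfold f. rewrite !Hidx by auto.
    destruct (chord2 G g c Hc Hmin i j ltac:(lia) ltac:(lia) Ha) as [->| ->].
    - apply adj_sym. apply Hadjphi.
    - apply Hadjphi. }
  assert (Hfin : finite_set G Sx).
  { exists (map c (seq 0 (K+1))). intros x [i [Hi <-]]. apply in_map. apply in_seq. lia. }
  assert (Hpath : forall i, i <= K -> connected_in G Sx (c 0) (c i) /\ connected_in G Sx (c i) (c 0)).
  { induction i as [|i IHi]; intros Hi.
    - split; apply rt_refl.
    - destruct IHi as [A B]; [lia|].
      assert (HS1 : Sx (c i)) by (exists i; split; [lia|reflexivity]).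
      assert (HS2 : Sx (c (S i))) by (exists (S i); split; [lia|reflexivity]).
      assert (Ha : adj G (c i) (c (S i))).
      { specialize (Hadj i ltac:(lia)). rewrite Nat.mod_small in Hadj by lia.
        rewrite Nat.add_1_r in Hadj. exact Hadj. }
      split.
      + eapply rt_trans; [exact A|]. apply rt_step. cbv beta. repeat split; auto.
      + eapply rt_trans; [|exact B]. apply rt_step. cbv beta. repeat split; auto.
        apply adj_sym; auto. }
  assert (Hind : induced_connected G Sx).
  { intros x y [i [Hi <-]] [j [Hj <-]].
    eapply rt_trans; [apply (Hpath i Hi)|apply (Hpath j Hj)]. }
  destruct (HH Sx f Hfin Hind Hhom) as [h [Hh Hext]].
  assert (hK : adj G (c K) (c (K+1))).
  { specialize (Hadj K ltac:(lia)). rewrite Nat.mod_small in Hadj by lia. exact Hadj. }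
  assert (hL : adj G (c (K+1)) (c 0)).
  { specialize (Hadj (K+1) ltac:(lia)).
    replace (K+1+1) with g in Hadj by lia. rewrite Nat.mod_same in Hadj by lia. exact Hadj. }
  assert (E1 : h (c K) = c (phi K)).
  { rewrite (Hext (c K)) by (exists K; split; [lia|reflexivity]).
    unfold f. rewrite Hidx by lia. reflexivity. }
  assert (E0 : h (c 0) = c 0).
  { rewrite (Hext (c 0)) by (exists 0; split; [lia|reflexivity]).
    unfold f. rewrite Hidx by lia. reflexivity. }
  apply (short G g c Hc Hmin (phi K) (h (c (K+1)))).
  - apply Hphi3. lia.
  - pose proof (Hphi K). lia.
  - rewrite <- E0. apply Hh. exact hL.
  - rewrite <- E1. apply Hh. exact hK.
Qed.
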